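(* Let $v_{max}\in\mathbb{N}$, $V=\{1,\ldots,v_{max}\}$, $b>0$ and $K>0$. Let $f_{mort}:V\to(0,1)$ be any function, and let $f_{mut}:\{-v_{max},\ldots,0,\ldots,v_{max}\}\to[0,1]$ satisfy: $f_{mut}(-u)=f_{mut}(u)$ for all $u$; $u\mapsto f_{mut}(u)$ is decreasing for $u\geq 0$; and $\sum_{u=-v_{max}}^{v_{max}} f_{mut}(u)=1$. Let $P_0:V\to[0,\infty)$ and define $P_n:V\to[0,\infty)$ recursively by $$P_{n+1}(v)=(1-f_{mort}(v))P_n(v)+b\,(P_n\star f_{mut})(v)\left(1-\frac{\|P_n\|_1}{K}\right)\mathbf{1}_{[0,K]}(\|P_n\|_1),\qquad v=1,\ldots,v_{max},$$ where $(P_n\star f_{mut})(v)=\sum_{u=1}^{v_{max}}P_n(u)f_{mut}(v-u)$, $\|P_n\|_1=\sum_{v=1}^{v_{max}}P_n(v)$, and $\mathbf{1}_{[0,K]}$ is the indicator function of $[0,K]$. Define $F_{mut}(u)=\sum_{v=1}^{v_{max}}f_{mut}(v-u)$ for $u=1,\ldots,v_{max}$. If $$\|1-f_{mort}\|_\infty+b\|F_{mut}\|_\infty\leq 1,$$ where $\|1-f_{mort}\|_\infty=\max_{v\in V}(1-f_{mort}(v))$ and $\|F_{mut}\|_\infty=\max_u F_{mut}(u)$, then $\lim_{n\to\infty}\|P_n\|_1=0$.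
   Context: This is a discrete population model (a Verhulst-type model with a trait): $P_n(v)$ is the number of individuals in generation $n$ with trait value $v$, $b$ is the birth rate, $K$ the environmental capacity, $f_{mort}$ the trait-dependent mortality rate and $f_{mut}$ the mutation distribution. *)

(* Defs.v *)
From HB Require Import structures.
From mathcomp Require Import all_boot all_order all_algebra.
From mathcomp Require Import all_classical all_reals all_analysis.
Set Implicit Arguments. Unset Strict Implicit. Unset Printing Implicit Defensive.
Import Order.TTheory GRing.Theory Num.Theory.
Local Open Scope ring_scope.

(* Traits V = {1,...,vmax} are encoded by i : 'I_vmax, i.e. v = i + 1.
   Differences v - u of traits are unchanged by this shift. *)
Section Model.
Variables (R : realType) (vmax : nat).

Definition norm1 (P : 'I_vmax -> R) : R := \sum_(v < vmax) P v.

Definition conv (P : 'I_vmax -> R) (fmut : int -> R) (v : 'I_vmax) : R :=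
  \sum_(u < vmax) P u * fmut ((v : nat)%:Z - (u : nat)%:Z).

Definition indicator01K (K x : R) : R := if (0 <= x) && (x <= K) then 1 else 0.

Definition step (fmort : 'I_vmax -> R) (fmut : int -> R) (b K : R)
  (P : 'I_vmax -> R) : 'I_vmax -> R :=
  fun v => (1 - fmort v) * P v
           + b * conv P fmut v * (1 - norm1 P / K) * indicator01K K (norm1 P).

Definition Pseq fmort fmut b K (P0 : 'I_vmax -> R) (n : nat) : 'I_vmax -> R :=
  iter n (step fmort fmut b K) P0.

Definition Fmut (fmut : int -> R) (u : 'I_vmax) : R :=
  \sum_(v < vmax) fmut ((v : nat)%:Z - (u : nat)%:Z).

(* sup norms as finite maxima (all terms are nonnegative under the
   hypotheses, so the default 0 for the empty max is harmless) *)
Definition supnorm (f : 'I_vmax -> R) : R := \big[Order.max/0]_(v < vmax) f v.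

End Model.

(* Main.v *)
Require Import Defs.
From HB Require Import structures.
From mathcomp Require Import all_boot all_order all_algebra.
From mathcomp Require Import all_classical all_reals all_analysis.
From mathcomp Require Import zify ring lra.
Import Order.TTheory GRing.Theory Num.Theory.
Local Open Scope classical_set_scope.
Local Open Scope ring_scope.

Section S.
Variables (R : realType) (vmax : nat) (b K : R)
  (fmort : 'I_vmax -> R) (fmut : int -> R).
Hypotheses (hb : 0 < b) (hK : 0 < K) (hmort : forall v, 0 < fmort v < 1)
  (hmut : forall u : int, `|u| <= (vmax : nat)%:Z -> 0 <= fmut u <= 1).

Lemma fmut_ge0 (v u : 'I_vmax) : 0 <= fmut ((v : nat)%:Z - (u : nat)%:Z).
Proof.
have h : `|(v : nat)%:Z - (u : nat)%:Z| <= (vmax : nat)%:Z.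
  rewrite ler_norml; have := ltn_ord v; have := ltn_ord u; move=> *; apply/andP; split; lia.
by case/andP: (hmut _ h).
Qed.

Definition ccK (P : 'I_vmax -> R) := (1 - norm1 P / K) * indicator01K K (norm1 P).

Lemma norm1_step P : norm1 (step fmort fmut b K P) =
  \sum_(u < vmax) P u * ((1 - fmort u) + b * ccK P * Fmut fmut u).
Proof.
rewrite /norm1 /step big_split /=.
under [RHS]eq_bigr do rewrite mulrDr.
rewrite big_split /=; congr (_ + _); first by apply: eq_bigr => i _; ring.
rewrite (eq_bigr (fun v : 'I_vmax => (b * ccK P) * Defs.conv P fmut v)); last first.
  by move=> i _; rewrite /ccK; ring.
rewrite -mulr_sumr /Defs.conv exchange_big mulr_sumr; apply: eq_bigr => u _.
rewrite /Fmut !mulr_sumr; apply: eq_bigr => v _; ring.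
Qed.


Lemma ind_cases (P : 'I_vmax -> R) : (0 <= norm1 P <= K /\ indicator01K K (norm1 P) = 1)
  \/ indicator01K K (norm1 P) = 0.
Proof. rewrite /indicator01K; case: ifP => H; [left | right] => //. Qed.

Lemma ccK_ge0 (P : 'I_vmax -> R) : 0 <= ccK P.
Proof.
rewrite /ccK; case: (ind_cases P) => [[/andP[h1 h2] ->]|->]; last by rewrite mulr0.
rewrite mulr1 subr_ge0 ler_pdivrMr // mul1r //.
Qed.

Lemma ccK_le1 (P : 'I_vmax -> R) : 0 <= norm1 P -> ccK P <= 1.
Proof.
move=> h; rewrite /ccK; case: (ind_cases P) => [[_ ->]|->]; last by rewrite mulr0.
rewrite mulr1 lerBlDr lerDl; apply: divr_ge0 => //; exact: ltW.
Qed.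

Lemma norm1_ge0 (P : 'I_vmax -> R) : (forall v, 0 <= P v) -> 0 <= norm1 P.
Proof. by move=> h; apply: sumr_ge0 => i _. Qed.

Lemma step_ge0 (P : 'I_vmax -> R) : (forall v, 0 <= P v) -> forall v, 0 <= step fmort fmut b K P v.
Proof.
move=> h v; rewrite /step; apply: addr_ge0.
  apply: mulr_ge0 => //; rewrite subr_ge0; by case/andP: (hmort v) => _ /ltW.
have -> : b * Defs.conv P fmut v * (1 - norm1 P / K) * indicator01K K (norm1 P)
  = (b * Defs.conv P fmut v) * ccK P by rewrite /ccK; ring.
apply: mulr_ge0; last exact: ccK_ge0.
apply: mulr_ge0; first exact: ltW.
apply: sumr_ge0 => u _; apply: mulr_ge0 => //; exact: fmut_ge0.
Qed.

Lemma Pseq_ge0 (P0 : 'I_vmax -> R) n : (forall v, 0 <= P0 v) -> forall v, 0 <= Pseq fmort fmut b K P0 n v.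
Proof.
move=> h; elim: n => [|n IH] //=; exact: step_ge0.
Qed.

Hypothesis hsum : supnorm (fun v : 'I_vmax => 1 - fmort v) + b * supnorm (@Fmut R vmax fmut) <= 1.

Local Notation q := (supnorm (fun v : 'I_vmax => 1 - fmort v)).

Lemma q_lt1 : q < 1.
Proof.
rewrite /q /supnorm; apply: bigmax_lt => // i _.
by rewrite ltrBlDr ltrDl; case/andP: (hmort i).
Qed.

Lemma factor_le (P : 'I_vmax -> R) u : (1 - fmort u) + b * ccK P * Fmut fmut u <= 1 - (1 - q) * (1 - ccK P).
Proof.
have h1 : 1 - fmort u <= q by rewrite /q /supnorm; exact: (le_bigmax _ (fun v : 'I_vmax => 1 - fmort v)).
have h2 : Fmut fmut u <= supnorm (@Fmut R vmax fmut).
  rewrite /supnorm; exact: (le_bigmax _ (@Fmut R vmax fmut)).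
have h3 : 0 <= b * ccK P by apply: mulr_ge0; [exact: ltW | exact: ccK_ge0].
have h4 := ler_wpM2l h3 h2.
have h5 := ccK_ge0 P.
have h6 : ccK P * (b * supnorm (@Fmut R vmax fmut)) <= ccK P * (1 - q).
  apply: ler_wpM2l => //; rewrite lerBrDl; exact hsum.
have e : b * ccK P * supnorm (@Fmut R vmax fmut) = ccK P * (b * supnorm (@Fmut R vmax fmut)) by ring.
rewrite e in h4.
have e2 : 1 - (1 - q) * (1 - ccK P) = q + ccK P * (1 - q) by ring.
rewrite e2; lra.
Qed.

Lemma norm_step_le (P : 'I_vmax -> R) : (forall v, 0 <= P v) ->
  norm1 (step fmort fmut b K P) <= norm1 P * (1 - (1 - q) * (1 - ccK P)).
Proof.
move=> h; rewrite norm1_step /norm1 mulr_suml; apply: ler_sum => u _.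
apply: ler_wpM2l => //; exact: factor_le.
Qed.

Lemma gap (P : 'I_vmax -> R) eps : (forall v, 0 <= P v) -> 0 < eps -> eps <= norm1 P ->
  Order.min eps (eps * eps / K) <= norm1 P * (1 - ccK P).
Proof.
move=> h e0 he; rewrite ge_min; apply/orP.
rewrite /ccK; case: (ind_cases P) => [[_ ->]|->].
  right; rewrite mulr1 ler_pdivrMr //.
  have -> : norm1 P * (1 - (1 - norm1 P / K)) * K = norm1 P * norm1 P * (K / K) by ring.
  rewrite divff ?gt_eqF // mulr1; apply: ler_pM => //; exact: ltW.
by left; rewrite mulr0 subr0 mulr1.
Qed.


Arguments norm1_ge0 [P].
Arguments Pseq_ge0 [P0].
Arguments ccK_le1 [P].
Arguments norm_step_le [P].
Arguments gap [P eps].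

Lemma main (P0 : 'I_vmax -> R) : (forall v, 0 <= P0 v) ->
  norm1 (Pseq fmort fmut b K P0 n) @[n --> \oo] --> 0.
Proof.
move=> h0.
pose N := fun n => norm1 (Pseq fmort fmut b K P0 n).
have Nge0 n : 0 <= N n := norm1_ge0 (Pseq_ge0 n h0).
have a0 : 0 < 1 - q by rewrite subr_gt0 q_lt1.
have NS n : N n.+1 <= N n * (1 - (1 - q) * (1 - ccK (Pseq fmort fmut b K P0 n))).
  exact: (norm_step_le (Pseq_ge0 n h0)).
have Nmono n : N n.+1 <= N n.
  have c1 : 0 <= 1 - ccK (Pseq fmort fmut b K P0 n) by rewrite subr_ge0; exact: ccK_le1 (Nge0 n).
  have p := mulr_ge0 (mulr_ge0 (Nge0 n) (ltW a0)) c1.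
  have := NS n; move: p; clear; move: (N n.+1) (N n) (ccK _) => x y c.
  move=> p H; apply: (le_trans H); rewrite -subr_ge0.
  have -> : y - y * (1 - (1 - q) * (1 - c)) = y * (1 - q) * (1 - c) by ring.
  exact: p.
apply/cvgrPdist_lt => e e0.
pose m := Order.min e (e * e / K).
have m0 : 0 < m by rewrite /m lt_min e0 /= divr_gt0 // mulr_gt0.
pose d := (1 - q) * m.
have d0 : 0 < d by rewrite mulr_gt0.
have Ndec n : e <= N n -> N n.+1 <= N n - d.
  move=> he; have g := gap (Pseq_ge0 n h0) e0 he.
  have := NS n; move: g; rewrite -/(N n) -/m.
  move: (N n.+1) (N n) (ccK _) => x y c g H; apply: (le_trans H).
  have -> : y * (1 - (1 - q) * (1 - c)) = y - (1 - q) * (y * (1 - c)) by ring.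
  rewrite lerD2l lerN2 /d; apply: ler_wpM2l => //; exact: ltW.
have key n : N n < e \/ N n <= N 0%N - n%:R * d.
  elim: n => [|n [IH|IH]]; first by right; rewrite mul0r subr0.
    by left; exact: le_lt_trans (Nmono n) IH.
  case: (ltP (N n) e) => H; first by left; exact: le_lt_trans (Nmono n) H.
  right; have := Ndec n H; rewrite -natr1; move: IH; clear.
  move: (N n.+1) (N n) (N 0%N) (n%:R) => x y z w; move=> *; lra.
pose M := Num.Def.archi_bound (N 0%N / d).
have HM0 : N 0%N < M%:R * d.
  by rewrite -ltr_pdivrMr //; apply: archi_boundP; apply: divr_ge0 => //; exact: ltW.
have HM : N M < e.
  case: (key M) => // H; exfalso; have := Nge0 M; move: H HM0; clear.
  move: (N M) (N 0%N) (M%:R * d) => x y z; move=> *; lra.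
have mono k : N (M + k)%N <= N M.
  elim: k => [|k IH]; first by rewrite addn0.
  by rewrite addnS; exact: le_trans (Nmono _) IH.
exists M => // n /= HMn.
rewrite sub0r normrN ger0_norm; last exact: Nge0.
rewrite -(subnKC HMn); exact: le_lt_trans (mono _) HM.
Qed.

End S.

Theorem theorem2p2 (R : realType) (vmax : nat) (b K : R)
  (fmort : 'I_vmax -> R) (fmut : int -> R) (P0 : 'I_vmax -> R) :
  0 < b -> 0 < K ->
  (forall v, 0 < fmort v < 1) ->
  (forall u : int, `|u| <= (vmax : nat)%:Z -> 0 <= fmut u <= 1) ->
  (forall u : int, `|u| <= (vmax : nat)%:Z -> fmut (- u) = fmut u) ->
  (forall u1 u2 : int, 0 <= u1 -> u1 <= u2 -> u2 <= (vmax : nat)%:Z ->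
     fmut u2 <= fmut u1) ->
  \sum_(i < (vmax + vmax).+1) fmut ((i : nat)%:Z - (vmax : nat)%:Z) = 1 ->
  (forall v, 0 <= P0 v) ->
  supnorm (fun v : 'I_vmax => 1 - fmort v) + b * supnorm (@Fmut R vmax fmut) <= 1 ->
  norm1 (Pseq fmort fmut b K P0 n) @[n --> \oo] --> 0.
Proof.
move=> hb hK hmort hmut _ _ _ h0 hsum.
by apply: main.
Qed.
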